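(* Let $m\ge 2$, $c\ge 0$, and let $x=((x^1,n_1),\dots,(x^q,n_q))$ (with $q\ge 2$) be a non-convergent Nash equilibrium of the best-worst rule $s=(c,m)$. Then $n_1\ge 2$ and $n_q\ge 2$, and moreover $0<x^1$ and $x^q<1$.
   Context: Setting: voters' ideal points are distributed uniformly (unit mass, Lebesgue measure) on $[0,1]$. There are $m$ candidates; a profile is $x=(x_1,\dots,x_m)\in[0,1]^m$. A voter with ideal point $y$ ranks candidates by distance $|x_i-y|$ (closer is better); ties are broken by a fair lottery (uniformly random strict order among tied candidates). Under the best-worst rule $s=(c,m)$ ($c\ge0$), a candidate receives $1$ point from each voter ranking her first, $-c$ from each voter ranking her last ($m$-th), and $0$ otherwise; $v_i(x)$ is candidate $i$'s expected total points. A (pure-strategy Nash) equilibrium is a profile $x^*$ with $v_i(x^* )\ge v_i(t,x^*_{-i})$ for all $i$ and $t\in[0,1]$ ($(t,x_{-i})$ is $x$ with $x_i$ replaced by $t$); it is non-convergent (NCNE) if at least two platforms are distinct. A profile determines its distinct occupied positions $x^1<\dots<x^q$, with $n_j$ the number of candidates at $x^j$; we write $x=((x^1,n_1),\dots,(x^q,n_q))$. *)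

(* Defs.v *)
From Stdlib Require Import Reals Lra List Arith Bool ClassicalEpsilon.
Open Scope R_scope.

(* A profile of m candidates: x : nat -> R, candidate i (i < m) at x i. *)

Definition closest (m : nat) (x : nat -> R) (i : nat) (y : R) : bool :=
  forallb (fun j => if Rle_dec (Rabs (x i - y)) (Rabs (x j - y)) then true else false)
          (seq 0 m).

Definition farthest (m : nat) (x : nat -> R) (i : nat) (y : R) : bool :=
  forallb (fun j => if Rle_dec (Rabs (x j - y)) (Rabs (x i - y)) then true else false)
          (seq 0 m).

Definition nties (m : nat) (x : nat -> R) (i : nat) (y : R) : nat :=
  length (filter (fun j => if Req_EM_T (Rabs (x j - y)) (Rabs (x i - y)) then true else false)
                 (seq 0 m)).

(* Probability (fair lottery among tied candidates) that voter y ranks i first / last. *)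
Definition pfirst m x i y : R :=
  if closest m x i y then / INR (nties m x i y) else 0.
Definition plast m x i y : R :=
  if farthest m x i y then / INR (nties m x i y) else 0.

Definition score (c : R) (m : nat) (x : nat -> R) (i : nat) (y : R) : R :=
  pfirst m x i y - c * plast m x i y.

(* Integral over [0,1] (uniform voter distribution, unit mass).  The value is
   the Riemann integral whenever f is Riemann integrable on [0,1] (which is the
   case for the step functions considered here); RiemannInt is independent of
   the integrability proof. *)
Definition integral01 (f : R -> R) : R :=
  epsilon (inhabits 0)
    (fun V => exists pr : Riemann_integrable f 0 1, RiemannInt pr = V).

Definition payoff (c : R) (m : nat) (x : nat -> R) (i : nat) : R :=
  integral01 (score c m x i).

Definition upd (x : nat -> R) (i : nat) (t : R) : nat -> R :=
  fun j => if Nat.eq_dec j i then t else x j.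

Definition is_profile (m : nat) (x : nat -> R) : Prop :=
  forall i, (i < m)%nat -> 0 <= x i <= 1.

Definition nash_eq (c : R) (m : nat) (x : nat -> R) : Prop :=
  is_profile m x /\
  forall i, (i < m)%nat -> forall t, 0 <= t <= 1 ->
    payoff c m x i >= payoff c m (upd x i t) i.

(* non-convergent: at least two distinct platforms (q >= 2) *)
Definition ncne (c : R) (m : nat) (x : nat -> R) : Prop :=
  nash_eq c m x /\ exists i j, (i < m)%nat /\ (j < m)%nat /\ x i <> x j.

(* Main.v *)
Require Import Defs.
From Stdlib Require Import Reals Lra List Arith Bool ClassicalEpsilon Lia Classical.
Open Scope R_scope.

Lemma const_open_int (f : R -> R) (a b v : R) :
  a <= b -> (forall y, a < y < b -> f y = v) -> Riemann_integrable f a b.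
Proof.
  intros Hab Hc.
  assert (Hs : IsStepFun f a b).
  { exists (a :: b :: nil). exists (v :: nil).
    unfold adapted_couple; repeat split.
    - intros k Hk; simpl in Hk.
      destruct k; [simpl; lra | simpl in Hk; lia].
    - simpl; unfold Rmin; destruct (Rle_dec a b); lra.
    - simpl; unfold Rmax; destruct (Rle_dec a b); lra.
    - intros k Hk; simpl in Hk. destruct k; [|lia].
      unfold constant_D_eq, open_interval; simpl. intros y Hy; apply Hc; lra. }
  intro eps.
  exists (mkStepFun Hs). exists (mkStepFun (StepFun_P4 a b 0)). split.
  - intros t _. simpl. unfold fct_cte. rewrite Rminus_diag, Rabs_R0. lra.
  - rewrite StepFun_P18, Rmult_0_l, Rabs_R0. apply cond_pos.
Qed.

Lemma step_int (f : R -> R) (L : list R) : forall a b, a <= b ->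
  (forall y z, a < y -> y < z -> z < b -> (forall p, In p L -> ~ (y <= p <= z)) -> f y = f z) ->
  Riemann_integrable f a b.
Proof.
  induction L as [|p L IH]; intros a b Hab Hc.
  - apply (const_open_int f a b (f ((a+b)/2)) Hab).
    intros y Hy. destruct (Rtotal_order y ((a+b)/2)) as [h|[h|h]].
    + apply Hc; try lra. intros p [].
    + rewrite h; reflexivity.
    + symmetry; apply Hc; try lra. intros p [].
  - destruct (Rlt_dec a p) as [h1|h1]; [destruct (Rlt_dec p b) as [h2|h2]|].
    + apply RiemannInt_P24 with p.
      * apply IH; [lra|]. intros y z H1 H2 H3 Hn. apply Hc; try lra.
        intros q [<-|Hq]; [lra| now apply Hn].
      * apply IH; [lra|]. intros y z H1 H2 H3 Hn. apply Hc; try lra.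
        intros q [<-|Hq]; [lra| now apply Hn].
    + apply IH; [lra|]. intros y z H1 H2 H3 Hn. apply Hc; try lra.
      intros q [<-|Hq]; [lra| now apply Hn].
    + apply IH; [lra|]. intros y z H1 H2 H3 Hn. apply Hc; try lra.
      intros q [<-|Hq]; [lra| now apply Hn].
Qed.

Lemma integral01_eq (f : R -> R) (pr : Riemann_integrable f 0 1) :
  integral01 f = RiemannInt pr.
Proof.
  unfold integral01.
  destruct (epsilon_spec (inhabits 0)
    (fun V => exists pr : Riemann_integrable f 0 1, RiemannInt pr = V)) as [pr' Hp].
  - exists (RiemannInt pr); exists pr; reflexivity.
  - rewrite <- Hp. apply RiemannInt_P5.
Qed.

Lemma forallb_ext_in {A} (f g : A -> bool) (l : list A) :
  (forall a, In a l -> f a = g a) -> forallb f l = forallb g l.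
Proof.
  induction l; simpl; intros H; auto.
  rewrite H by auto. rewrite IHl; auto.
Qed.

Lemma abs_cmp (u v y z : R) :
  ~ (y <= (u+v)/2 <= z) -> y < z ->
  ((Rabs (u - y) <= Rabs (v - y)) <-> (Rabs (u - z) <= Rabs (v - z))) /\
  ((Rabs (u - y) = Rabs (v - y)) <-> (Rabs (u - z) = Rabs (v - z))).
Proof.
  intros Hn Hyz.
  destruct (Rtotal_order u v) as [h|[h|h]].
  - subst; unfold Rabs;
    destruct (Rcase_abs (u - y)); destruct (Rcase_abs (v - y));
    destruct (Rcase_abs (u - z)); destruct (Rcase_abs (v - z));
    (split; split; intro; lra).
  - subst; split; split; intros; (apply Rle_refl || reflexivity).
  - unfold Rabs;
    destruct (Rcase_abs (u - y)); destruct (Rcase_abs (v - y));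
    destruct (Rcase_abs (u - z)); destruct (Rcase_abs (v - z));
    (split; split; intro; lra).
Qed.

Definition mids (m : nat) (x : nat -> R) : list R :=
  flat_map (fun j => map (fun k => (x j + x k)/2) (seq 0 m)) (seq 0 m).

Lemma in_mids m x j k : (j < m)%nat -> (k < m)%nat -> In ((x j + x k)/2) (mids m x).
Proof.
  intros; unfold mids. apply in_flat_map. exists j; split; [apply in_seq; lia|].
  apply in_map_iff. exists k; split; auto. apply in_seq; lia.
Qed.

Lemma score_const c m x i y z : (i < m)%nat -> y < z ->
  (forall p, In p (mids m x) -> ~ (y <= p <= z)) ->
  score c m x i y = score c m x i z.
Proof.
  intros Hi Hyz Hn.
  assert (K : forall j k, (j < m)%nat -> (k < m)%nat ->
     ((Rabs (x j - y) <= Rabs (x k - y)) <-> (Rabs (x j - z) <= Rabs (x k - z))) /\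
     ((Rabs (x j - y) = Rabs (x k - y)) <-> (Rabs (x j - z) = Rabs (x k - z)))).
  { intros j k Hj Hk. apply abs_cmp; auto. apply Hn, in_mids; auto. }
  assert (Hcl : closest m x i y = closest m x i z).
  { unfold closest; apply forallb_ext_in; intros j Hj; apply in_seq in Hj.
    destruct (K i j Hi ltac:(lia)) as [[K1 K2] _].
    destruct (Rle_dec _ _); destruct (Rle_dec _ _); tauto. }
  assert (Hfa : farthest m x i y = farthest m x i z).
  { unfold farthest; apply forallb_ext_in; intros j Hj; apply in_seq in Hj.
    destruct (K j i ltac:(lia) Hi) as [[K1 K2] _].
    destruct (Rle_dec _ _); destruct (Rle_dec _ _); tauto. }
  assert (Hnt : nties m x i y = nties m x i z).
  { unfold nties; f_equal; apply filter_ext_in; intros j Hj; apply in_seq in Hj.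
    destruct (K j i ltac:(lia) Hi) as [_ [K1 K2]].
    destruct (Req_EM_T _ _); destruct (Req_EM_T _ _); tauto. }
  unfold score, pfirst, plast. rewrite Hcl, Hfa, Hnt. reflexivity.
Qed.

Lemma score_int c m x i : (i < m)%nat -> Riemann_integrable (score c m x i) 0 1.
Proof.
  intros Hi. apply (step_int _ (mids m x)); [lra|].
  intros y z _ Hyz _ Hn. apply score_const; auto.
Qed.

Lemma nties_ge1 m x i y : (i < m)%nat -> (1 <= nties m x i y)%nat.
Proof.
  intros Hi. unfold nties.
  assert (In i (filter (fun j => if Req_EM_T (Rabs (x j - y)) (Rabs (x i - y)) then true else false) (seq 0 m))).
  { apply filter_In; split; [apply in_seq; lia|]. destruct (Req_EM_T _ _); auto. }
  destruct (filter _ _); simpl in *; [contradiction|lia].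
Qed.

Lemma nties_ge2 m x i j y : (i < m)%nat -> (j < m)%nat -> j <> i -> x j = x i ->
  (2 <= nties m x i y)%nat.
Proof.
  intros Hi Hj Hji Hx. unfold nties.
  set (F := filter _ _).
  assert (incl (i :: j :: nil) F).
  { intros k Hk. simpl in Hk. unfold F; apply filter_In.
    destruct Hk as [<-|[<-|[]]]; (split; [apply in_seq; lia|]);
    destruct (Req_EM_T _ _); auto; try congruence. }
  apply (NoDup_incl_length (l := i :: j :: nil)) in H; [simpl in H; lia|].
  constructor; [simpl; intuition|]. constructor; [simpl; auto| constructor].
Qed.

Lemma filter_one (p : nat -> bool) i : forall n, (i < n)%nat ->
  (forall j, (j < n)%nat -> (p j = true <-> j = i)) ->
  length (filter p (seq 0 n)) = 1%nat.
Proof.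
  induction n; intros Hi H; [lia|].
  rewrite seq_S, filter_app, length_app. simpl.
  destruct (Nat.eq_dec i n) as [->|Hne].
  - assert (Hp : p n = true) by (apply H; auto).
    rewrite Hp. simpl.
    assert (filter p (seq 0 n) = nil).
    { rewrite (filter_ext_in p (fun _ => false)); [apply filter_false|].
      intros a Ha. apply in_seq in Ha.
      destruct (p a) eqn:E; auto. apply H in E; lia. }
    rewrite H0; reflexivity.
  - assert (Hp : p n = false).
    { destruct (p n) eqn:E; auto. apply H in E; [lia|lia]. }
    rewrite Hp. simpl. rewrite IHn; [lia|lia|]. intros j Hj; apply H; lia.
Qed.

Lemma nties_one m x i y : (i < m)%nat ->
  (forall j, (j < m)%nat -> j <> i -> Rabs (x j - y) <> Rabs (x i - y)) ->
  nties m x i y = 1%nat.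
Proof.
  intros Hi H. unfold nties. apply filter_one with i; auto.
  intros j Hj. destruct (Req_EM_T _ _) as [e|e]; split; intro Hq.
  - destruct (Nat.eq_dec j i); auto. exfalso; exact (H j Hj n e).
  - reflexivity.
  - discriminate.
  - subst; contradiction.
Qed.

Lemma closest_true m x i y :
  (forall j, (j < m)%nat -> Rabs (x i - y) <= Rabs (x j - y)) -> closest m x i y = true.
Proof.
  intros H. unfold closest. apply forallb_forall. intros j Hj; apply in_seq in Hj.
  destruct (Rle_dec _ _); auto. exfalso; apply n, H; lia.
Qed.

Lemma closest_false m x i y j : (j < m)%nat ->
  Rabs (x j - y) < Rabs (x i - y) -> closest m x i y = false.
Proof.
  intros Hj H. unfold closest. destruct (forallb _ _) eqn:E; auto.
  rewrite forallb_forall in E. specialize (E j ltac:(apply in_seq; lia)).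
  destruct (Rle_dec _ _); [lra|discriminate].
Qed.

Lemma farthest_true m x i y :
  (forall j, (j < m)%nat -> Rabs (x j - y) <= Rabs (x i - y)) -> farthest m x i y = true.
Proof.
  intros H. unfold farthest. apply forallb_forall. intros j Hj; apply in_seq in Hj.
  destruct (Rle_dec _ _); auto. exfalso; apply n, H; lia.
Qed.

Lemma farthest_false m x i y j : (j < m)%nat ->
  Rabs (x i - y) < Rabs (x j - y) -> farthest m x i y = false.
Proof.
  intros Hj H. unfold farthest. destruct (forallb _ _) eqn:E; auto.
  rewrite forallb_forall in E. specialize (E j ltac:(apply in_seq; lia)).
  destruct (Rle_dec _ _); [lra|discriminate].
Qed.

Lemma farthest_all m x i y : farthest m x i y = true ->
  forall j, (j < m)%nat -> Rabs (x j - y) <= Rabs (x i - y).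
Proof.
  intros E j Hj. unfold farthest in E. rewrite forallb_forall in E.
  specialize (E j ltac:(apply in_seq; lia)). destruct (Rle_dec _ _); [auto|discriminate].
Qed.

Lemma closest_all m x i y : closest m x i y = true ->
  forall j, (j < m)%nat -> Rabs (x i - y) <= Rabs (x j - y).
Proof.
  intros E j Hj. unfold closest in E. rewrite forallb_forall in E.
  specialize (E j ltac:(apply in_seq; lia)). destruct (Rle_dec _ _); [auto|discriminate].
Qed.

Lemma inv_nties_bounds m x i y : (i < m)%nat ->
  0 < / INR (nties m x i y) <= 1.
Proof.
  intros Hi. pose proof (nties_ge1 m x i y Hi) as H. apply le_INR in H. simpl in H.
  split. apply Rinv_0_lt_compat; lra.
  rewrite <- Rinv_1. apply Rinv_le_contravar; lra.
Qed.

Lemma pfirst_bounds m x i y : (i < m)%nat -> 0 <= pfirst m x i y <= 1.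
Proof.
  intros Hi; unfold pfirst; pose proof (inv_nties_bounds m x i y Hi).
  destruct (closest _ _ _ _); lra.
Qed.

Lemma plast_bounds m x i y : (i < m)%nat -> 0 <= plast m x i y <= 1.
Proof.
  intros Hi; unfold plast; pose proof (inv_nties_bounds m x i y Hi).
  destruct (farthest _ _ _ _); lra.
Qed.

Lemma score_dist_ext c m x x' i y : (i < m)%nat ->
  (forall j, (j < m)%nat -> Rabs (x' j - y) = Rabs (x j - y)) ->
  score c m x' i y = score c m x i y.
Proof.
  intros Hi H.
  unfold score, pfirst, plast, closest, farthest, nties.
  rewrite (forallb_ext_in (fun j => if Rle_dec (Rabs (x' i - y)) (Rabs (x' j - y)) then true else false)
    (fun j => if Rle_dec (Rabs (x i - y)) (Rabs (x j - y)) then true else false)).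
  2:{ intros j Hj; apply in_seq in Hj. rewrite !H by lia. reflexivity. }
  rewrite (forallb_ext_in (fun j => if Rle_dec (Rabs (x' j - y)) (Rabs (x' i - y)) then true else false)
    (fun j => if Rle_dec (Rabs (x j - y)) (Rabs (x i - y)) then true else false)).
  2:{ intros j Hj; apply in_seq in Hj. rewrite !H by lia. reflexivity. }
  rewrite (filter_ext_in (fun j => if Req_EM_T (Rabs (x' j - y)) (Rabs (x' i - y)) then true else false)
    (fun j => if Req_EM_T (Rabs (x j - y)) (Rabs (x i - y)) then true else false)).
  2:{ intros j Hj; apply in_seq in Hj. rewrite !H by lia. reflexivity. }
  reflexivity.
Qed.

Lemma upd_i x i t : upd x i t i = t.
Proof. unfold upd; destruct (Nat.eq_dec i i); congruence. Qed.
Lemma upd_j x i t j : j <> i -> upd x i t j = x j.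
Proof. unfold upd; destruct (Nat.eq_dec j i); congruence. Qed.

Lemma score_mono c m x i t y : 0 <= c -> (i < m)%nat ->
  Rabs (t - y) <= Rabs (x i - y) ->
  score c m x i y <= score c m (upd x i t) i y.
Proof.
  intros Hc Hi Hd. destruct Hd as [Hd|Hd].
  2:{ right. symmetry. apply score_dist_ext; auto. intros j Hj.
      destruct (Nat.eq_dec j i) as [->|n]; [rewrite upd_i; auto| rewrite upd_j; auto]. }
  set (x' := upd x i t).
  assert (Ex : forall j, j <> i -> x' j = x j) by (intros; apply upd_j; auto).
  assert (Ei : x' i = t) by apply upd_i.
  assert (Pf : pfirst m x i y <= pfirst m x' i y).
  { unfold pfirst at 1. destruct (closest m x i y) eqn:E.
    - pose proof (closest_all _ _ _ _ E) as HA.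
      assert (closest m x' i y = true).
      { apply closest_true. intros j Hj. rewrite Ei. destruct (Nat.eq_dec j i) as [->|n].
        rewrite Ei; lra. rewrite Ex by auto. specialize (HA j Hj); lra. }
      unfold pfirst; rewrite H. rewrite (nties_one m x'); auto.
      + simpl. rewrite Rinv_1. apply inv_nties_bounds; auto.
      + intros j Hj Hne. rewrite Ex, Ei by auto. specialize (HA j Hj); lra.
    - apply pfirst_bounds; auto. }
  assert (Pl : plast m x' i y <= plast m x i y).
  { unfold plast at 1. destruct (farthest m x' i y) eqn:E.
    - pose proof (farthest_all _ _ _ _ E) as HA.
      assert (farthest m x i y = true).
      { apply farthest_true. intros j Hj. destruct (Nat.eq_dec j i) as [->|n]. lra.
        specialize (HA j Hj). rewrite Ex in HA by auto. rewrite Ei in HA; lra. }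
      unfold plast; rewrite H. rewrite (nties_one m x); auto.
      + simpl. rewrite Rinv_1. apply inv_nties_bounds; auto.
      + intros j Hj Hne. specialize (HA j Hj). rewrite Ex, Ei in HA by auto. lra.
    - apply plast_bounds; auto. }
  unfold score. fold x'. pose proof (Rmult_le_compat_l c _ _ Hc Pl). lra.
Qed.

Lemma score_one c m x i y : (i < m)%nat ->
  (forall j, (j < m)%nat -> j <> i -> Rabs (x i - y) < Rabs (x j - y)) ->
  (exists j, (j < m)%nat /\ j <> i) -> score c m x i y = 1.
Proof.
  intros Hi H [j0 [Hj0 Hne0]].
  unfold score, pfirst, plast.
  rewrite closest_true.
  2:{ intros j Hj. destruct (Nat.eq_dec j i) as [->|n]; [lra|]. left; auto. }
  rewrite (farthest_false m x i y j0); auto.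
  rewrite nties_one; auto. simpl; rewrite Rinv_1; ring.
  intros j Hj Hne. specialize (H j Hj Hne); lra.
Qed.

Lemma score_nonpos c m x i y j : 0 <= c -> (i < m)%nat -> (j < m)%nat ->
  Rabs (x j - y) < Rabs (x i - y) -> score c m x i y <= 0.
Proof.
  intros Hc Hi Hj H. unfold score. unfold pfirst. rewrite (closest_false m x i y j); auto.
  pose proof (plast_bounds m x i y Hi). pose proof (Rmult_le_pos c _ Hc (proj1 H0)). lra.
Qed.

Lemma score_nonneg c m x i y j : (i < m)%nat -> (j < m)%nat ->
  Rabs (x i - y) < Rabs (x j - y) -> 0 <= score c m x i y.
Proof.
  intros Hi Hj H. unfold score. unfold plast. rewrite (farthest_false m x i y j); auto.
  pose proof (pfirst_bounds m x i y Hi). lra.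
Qed.

Lemma score_half c m x i y j : 0 <= c -> (i < m)%nat -> (j < m)%nat -> j <> i -> x j = x i ->
  score c m x i y <= /2.
Proof.
  intros Hc Hi Hj Hne Hx. unfold score.
  pose proof (plast_bounds m x i y Hi). pose proof (Rmult_le_pos c _ Hc (proj1 H)).
  assert (pfirst m x i y <= /2).
  { unfold pfirst. destruct (closest _ _ _ _); [|lra].
    pose proof (nties_ge2 m x i j y Hi Hj Hne Hx) as K. apply le_INR in K.
    apply Rinv_le_contravar; simpl in *; lra. }
  lra.
Qed.

Lemma score_int_gen c m x i u v : (i < m)%nat -> u <= v -> Riemann_integrable (score c m x i) u v.
Proof.
  intros Hi Huv. apply (step_int _ (mids m x)); [lra|].
  intros y z _ Hyz _ Hn. apply score_const; auto.
Qed.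

Lemma piece_ge (d : R -> R) u v k (pr : Riemann_integrable d u v) :
  u <= v -> (forall y, u < y < v -> k <= d y) -> k * (v - u) <= RiemannInt pr.
Proof.
  intros Huv H. rewrite <- (RiemannInt_P15 (RiemannInt_P14 u v k)).
  apply RiemannInt_P19; auto.
Qed.

Lemma split5 (d : R -> R) (H : forall u v, u <= v -> Riemann_integrable d u v)
  p1 p2 p3 p4 k1 k2 (pr : Riemann_integrable d 0 1) :
  0 <= p1 -> p1 <= p2 -> p2 <= p3 -> p3 <= p4 -> p4 <= 1 ->
  (forall y, p1 < y < p2 -> k1 <= d y) ->
  (forall y, p3 < y < p4 -> k2 <= d y) ->
  (forall y, 0 < y < 1 -> ~ (p1 < y < p2) -> ~ (p3 < y < p4) -> 0 <= d y) ->
  k1 * (p2 - p1) + k2 * (p4 - p3) <= RiemannInt pr.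
Proof.
  intros h1 h2 h3 h4 h5 G1 G2 G0.
  pose proof (piece_ge d 0 p1 0 (H 0 p1 h1) h1 ltac:(intros; apply G0; lra)) as I1.
  pose proof (piece_ge d p1 p2 k1 (H p1 p2 h2) h2 G1) as I2.
  pose proof (piece_ge d p2 p3 0 (H p2 p3 h3) h3 ltac:(intros; apply G0; lra)) as I3.
  pose proof (piece_ge d p3 p4 k2 (H p3 p4 h4) h4 G2) as I4.
  pose proof (piece_ge d p4 1 0 (H p4 1 h5) h5 ltac:(intros; apply G0; lra)) as I5.
  assert (q1 : p1 <= 1) by lra. assert (q2 : p2 <= 1) by lra. assert (q3 : p3 <= 1) by lra.
  rewrite <- (RiemannInt_P26 (H 0 p1 h1) (H p1 1 q1) pr).
  rewrite <- (RiemannInt_P26 (H p1 p2 h2) (H p2 1 q2) (H p1 1 q1)).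
  rewrite <- (RiemannInt_P26 (H p2 p3 h3) (H p3 1 q3) (H p2 1 q2)).
  rewrite <- (RiemannInt_P26 (H p3 p4 h4) (H p4 1 h5) (H p3 1 q3)).
  clear -I1 I2 I3 I4 I5. set (A := k1 * (p2 - p1)) in *. set (B := k2 * (p4 - p3)) in *. lra.
Qed.

Lemma dev_better c m x i t p1 p2 p3 p4 k1 k2 : (i < m)%nat ->
  0 <= p1 -> p1 <= p2 -> p2 <= p3 -> p3 <= p4 -> p4 <= 1 ->
  0 < k1 * (p2 - p1) + k2 * (p4 - p3) ->
  (forall y, p1 < y < p2 -> k1 <= score c m (upd x i t) i y - score c m x i y) ->
  (forall y, p3 < y < p4 -> k2 <= score c m (upd x i t) i y - score c m x i y) ->
  (forall y, 0 < y < 1 -> ~ (p1 < y < p2) -> ~ (p3 < y < p4) ->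
     0 <= score c m (upd x i t) i y - score c m x i y) ->
  payoff c m x i < payoff c m (upd x i t) i.
Proof.
  intros Hi h1 h2 h3 h4 h5 Hpos G1 G2 G0.
  assert (z01 : 0 <= 1) by lra.
  assert (H : forall u v, u <= v -> Riemann_integrable (fun y => score c m (upd x i t) i y + -1 * score c m x i y) u v).
  { intros u v Huv. apply RiemannInt_P10; apply score_int_gen; auto. }
  pose proof (split5 _ H p1 p2 p3 p4 k1 k2 (H 0 1 z01) h1 h2 h3 h4 h5
    ltac:(intros y Hy; specialize (G1 y Hy); lra)
    ltac:(intros y Hy; specialize (G2 y Hy); lra)
    ltac:(intros y Hy n1 n2; specialize (G0 y Hy n1 n2); lra)) as K.
  unfold payoff.
  rewrite (integral01_eq (score c m (upd x i t) i) (score_int_gen c m (upd x i t) i 0 1 Hi z01)).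
  rewrite (integral01_eq (score c m x i) (score_int_gen c m x i 0 1 Hi z01)).
  rewrite (RiemannInt_P13 (score_int_gen c m (upd x i t) i 0 1 Hi z01)
             (score_int_gen c m x i 0 1 Hi z01) (H 0 1 z01)) in K.
  lra.
Qed.

Lemma argmin_gt (x : nat -> R) a : forall m, (exists j, (j < m)%nat /\ a < x j) ->
  exists j0, (j0 < m)%nat /\ a < x j0 /\ forall j, (j < m)%nat -> a < x j -> x j0 <= x j.
Proof.
  induction m as [|m IH]; intros [j [Hj Ha]]; [lia|].
  destruct (classic (exists j, (j < m)%nat /\ a < x j)) as [E|E].
  - destruct (IH E) as [j0 [H1 [H2 H3]]].
    destruct (classic (a < x m /\ x m < x j0)) as [[l1 l2]|l].
    + exists m; repeat split; auto.
      intros k Hk Hak. destruct (Nat.eq_dec k m) as [->|n]; [lra|].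
      specialize (H3 k ltac:(lia) Hak); lra.
    + exists j0; repeat split; auto. intros k Hk Hak.
      destruct (Nat.eq_dec k m) as [->|n].
      * destruct (Rle_dec (x j0) (x m)); auto. exfalso; apply l; split; lra.
      * apply H3; auto; lia.
  - exists m. assert (j = m).
    { destruct (Nat.eq_dec j m); auto. exfalso; apply E; exists j; split; auto; lia. }
    subst; repeat split; auto. intros k Hk Hak.
    destruct (Nat.eq_dec k m) as [->|n]; [lra|]. exfalso; apply E; exists k; split; auto; lia.
Qed.

Lemma argmax_lt (x : nat -> R) a m : (exists j, (j < m)%nat /\ x j < a) ->
  exists j0, (j0 < m)%nat /\ x j0 < a /\ forall j, (j < m)%nat -> x j < a -> x j <= x j0.
Proof.
  intros [j [Hj Ha]].
  destruct (argmin_gt (fun k => - x k) (-a) m) as [j0 [H1 [H2 H3]]].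
  - exists j; split; auto; lra.
  - exists j0; repeat split; auto; [lra|]. intros k Hk Hak.
    specialize (H3 k Hk ltac:(lra)); lra.
Qed.

Ltac rabs := unfold Rabs; repeat destruct Rcase_abs; lra.


Lemma case1L c m x i : 0 <= c -> (i < m)%nat -> is_profile m x ->
  (forall j, (j < m)%nat -> j <> i -> x i < x j) ->
  (exists j, (j < m)%nat /\ x i < x j) ->
  exists t, 0 <= t <= 1 /\ payoff c m x i < payoff c m (upd x i t) i.
Proof.
  intros Hc Hi Hp Hal Hex.
  destruct (argmin_gt x (x i) m Hex) as [j0 [Hj0 [Hab Hm0]]].
  set (a := x i) in *. set (b := x j0) in *.
  assert (Hge : forall j, (j < m)%nat -> j <> i -> b <= x j).
  { intros j Hj Hne. apply Hm0; auto. }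
  assert (Hji : j0 <> i) by (intro; subst; unfold a, b in *; lra).
  pose proof (Hp i Hi) as Pa. pose proof (Hp j0 Hj0) as Pb. fold a b in Pa, Pb.
  set (t := (a+b)/2).
  exists t. split; [unfold t; lra|].
  assert (New1 : forall y, (forall j, (j < m)%nat -> j <> i -> Rabs (t - y) < Rabs (x j - y)) ->
                 score c m (upd x i t) i y = 1).
  { intros y Hy. apply score_one; auto; [|exists j0; auto].
    intros j Hj Hne. rewrite upd_i, upd_j by auto. auto. }
  apply (dev_better c m x i t ((a+b)/2) ((a+3*b)/4) ((a+3*b)/4) ((a+3*b)/4) 1 0 Hi);
    try lra.
  - intros y Hy. rewrite New1.
    + pose proof (score_nonpos c m x i y j0 Hc Hi Hj0 ltac:(fold a b; rabs)). lra.
    + intros j Hj Hne. specialize (Hge j Hj Hne). unfold t; rabs.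
  - intros y Hy; lra.
  - intros y Hy _ _. destruct (Rle_dec (a + (b-a)/4) y).
    + pose proof (score_mono c m x i t y Hc Hi ltac:(fold a; unfold t; rabs)). lra.
    + rewrite New1.
      * rewrite (score_one c m x i y Hi); [lra| |exists j0; auto].
        intros j Hj Hne. specialize (Hge j Hj Hne). fold a; rabs.
      * intros j Hj Hne. specialize (Hge j Hj Hne). unfold t; rabs.
Qed.

Lemma case2L c m x i j1 : 0 <= c -> (i < m)%nat -> is_profile m x ->
  (forall j, (j < m)%nat -> x i <= x j) -> x i = 0 ->
  (j1 < m)%nat -> j1 <> i -> x j1 = x i ->
  (exists j, (j < m)%nat /\ x i < x j) ->
  exists t, 0 <= t <= 1 /\ payoff c m x i < payoff c m (upd x i t) i.
Proof.
  intros Hc Hi Hp Hmin H0 Hj1 Hj1i Hx1 Hex.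
  destruct (argmin_gt x (x i) m Hex) as [j0 [Hj0 [Hab Hm0]]].
  set (a := x i) in *. set (b := x j0) in *.
  assert (Hge : forall j, (j < m)%nat -> x j = 0 \/ b <= x j).
  { intros j Hj. destruct (Rle_dec (x j) a). left; specialize (Hmin j Hj); lra.
    right; apply Hm0; auto; lra. }
  assert (Hji : j0 <> i) by (intro; subst; unfold a, b in *; lra).
  pose proof (Hp j0 Hj0) as Pb. fold b in Pb.
  set (t := b/2).
  exists t. split; [unfold t; lra|].
  apply (dev_better c m x i t 0 (b/4) (b/2) (3*b/4) (-1/2) 1 Hi); try lra.
  - intros y Hy.
    pose proof (score_half c m x i y j1 Hc Hi Hj1 Hj1i Hx1).
    pose proof (score_nonneg c m (upd x i t) i y j0 Hi Hj0
       ltac:(rewrite upd_i, upd_j by auto; fold b; unfold t; rabs)). lra.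
  - intros y Hy. rewrite (score_one c m (upd x i t) i y Hi); [| |exists j0; auto].
    + pose proof (score_nonpos c m x i y j0 Hc Hi Hj0 ltac:(fold a b; rabs)). lra.
    + intros j Hj Hne. rewrite upd_i, upd_j by auto.
      destruct (Hge j Hj) as [e|e]; [rewrite e|]; unfold t; rabs.
  - intros y Hy n1 _.
    pose proof (score_mono c m x i t y Hc Hi ltac:(fold a; unfold t; rabs)). lra.
Qed.

Lemma case1R c m x i : 0 <= c -> (i < m)%nat -> is_profile m x ->
  (forall j, (j < m)%nat -> j <> i -> x j < x i) ->
  (exists j, (j < m)%nat /\ x j < x i) ->
  exists t, 0 <= t <= 1 /\ payoff c m x i < payoff c m (upd x i t) i.
Proof.
  intros Hc Hi Hp Hal Hex.
  destruct (argmax_lt x (x i) m Hex) as [j0 [Hj0 [Hab Hm0]]].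
  set (a := x i) in *. set (b := x j0) in *.
  assert (Hge : forall j, (j < m)%nat -> j <> i -> x j <= b).
  { intros j Hj Hne. apply Hm0; auto. }
  assert (Hji : j0 <> i) by (intro; subst; unfold a, b in *; lra).
  pose proof (Hp i Hi) as Pa. pose proof (Hp j0 Hj0) as Pb. fold a b in Pa, Pb.
  set (t := (a+b)/2).
  exists t. split; [unfold t; lra|].
  assert (New1 : forall y, (forall j, (j < m)%nat -> j <> i -> Rabs (t - y) < Rabs (x j - y)) ->
                 score c m (upd x i t) i y = 1).
  { intros y Hy. apply score_one; auto; [|exists j0; auto].
    intros j Hj Hne. rewrite upd_i, upd_j by auto. auto. }
  apply (dev_better c m x i t ((a+3*b)/4) ((a+b)/2) ((a+b)/2) ((a+b)/2) 1 0 Hi);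
    try lra.
  - intros y Hy. rewrite New1.
    + pose proof (score_nonpos c m x i y j0 Hc Hi Hj0 ltac:(fold a b; rabs)). lra.
    + intros j Hj Hne. specialize (Hge j Hj Hne). unfold t; rabs.
  - intros y Hy; lra.
  - intros y Hy _ _. destruct (Rle_dec y (a - (a-b)/4)).
    + pose proof (score_mono c m x i t y Hc Hi ltac:(fold a; unfold t; rabs)). lra.
    + rewrite New1.
      * rewrite (score_one c m x i y Hi); [lra| |exists j0; auto].
        intros j Hj Hne. specialize (Hge j Hj Hne). fold a; rabs.
      * intros j Hj Hne. specialize (Hge j Hj Hne). unfold t; rabs.
Qed.

Lemma case2R c m x i j1 : 0 <= c -> (i < m)%nat -> is_profile m x ->
  (forall j, (j < m)%nat -> x j <= x i) -> x i = 1 ->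
  (j1 < m)%nat -> j1 <> i -> x j1 = x i ->
  (exists j, (j < m)%nat /\ x j < x i) ->
  exists t, 0 <= t <= 1 /\ payoff c m x i < payoff c m (upd x i t) i.
Proof.
  intros Hc Hi Hp Hmax H1 Hj1 Hj1i Hx1 Hex.
  destruct (argmax_lt x (x i) m Hex) as [j0 [Hj0 [Hab Hm0]]].
  set (a := x i) in *. set (b := x j0) in *.
  assert (Hge : forall j, (j < m)%nat -> x j = 1 \/ x j <= b).
  { intros j Hj. destruct (Rle_dec a (x j)). left; specialize (Hmax j Hj); lra.
    right; apply Hm0; auto; lra. }
  assert (Hji : j0 <> i) by (intro; subst; unfold a, b in *; lra).
  pose proof (Hp j0 Hj0) as Pb. fold b in Pb.
  set (t := (1+b)/2).
  exists t. split; [unfold t; lra|].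
  apply (dev_better c m x i t ((1+3*b)/4) ((1+b)/2) ((3+b)/4) 1 1 (-1/2) Hi); try lra.
  - intros y Hy. rewrite (score_one c m (upd x i t) i y Hi); [| |exists j0; auto].
    + pose proof (score_nonpos c m x i y j0 Hc Hi Hj0 ltac:(fold a b; rabs)). lra.
    + intros j Hj Hne. rewrite upd_i, upd_j by auto.
      destruct (Hge j Hj) as [e|e]; [rewrite e|]; unfold t; rabs.
  - intros y Hy.
    pose proof (score_half c m x i y j1 Hc Hi Hj1 Hj1i Hx1).
    pose proof (score_nonneg c m (upd x i t) i y j0 Hi Hj0
       ltac:(rewrite upd_i, upd_j by auto; fold b; unfold t; rabs)). lra.
  - intros y Hy _ n2.
    pose proof (score_mono c m x i t y Hc Hi ltac:(fold a; unfold t; rabs)). lra.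
Qed.

Theorem lemma1 (m : nat) (c : R) (x : nat -> R) :
  (2 <= m)%nat -> 0 <= c -> ncne c m x ->
  (forall i, (i < m)%nat -> (forall j, (j < m)%nat -> x i <= x j) ->
     (exists j, (j < m)%nat /\ j <> i /\ x j = x i) /\ 0 < x i) /\
  (forall i, (i < m)%nat -> (forall j, (j < m)%nat -> x j <= x i) ->
     (exists j, (j < m)%nat /\ j <> i /\ x j = x i) /\ x i < 1).
Proof.
  intros Hm Hc [[Hp Hn] [i1 [j1 [Hi1 [Hj1 Hne]]]]].
  assert (Contra : forall i, (i < m)%nat ->
     (exists t, 0 <= t <= 1 /\ payoff c m x i < payoff c m (upd x i t) i) -> False).
  { intros i Hi [t [Ht Hlt]]. specialize (Hn i Hi t Ht). lra. }
  split.
  - intros i Hi Hmin.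
    assert (Hex : exists j, (j < m)%nat /\ x i < x j).
    { destruct (Rlt_dec (x i) (x i1)). exists i1; auto.
      exists j1; split; auto. pose proof (Hmin i1 Hi1). pose proof (Hmin j1 Hj1) as H2.
      destruct (Rle_lt_or_eq_dec _ _ H2); auto. exfalso; apply Hne; lra. }
    destruct (classic (exists j, (j < m)%nat /\ j <> i /\ x j = x i)) as [Hs|Hs].
    + split; auto. destruct (Rlt_dec 0 (x i)) as [h|h]; auto.
      exfalso. destruct Hs as [j [Hj [Hji Hxj]]]. apply (Contra i Hi).
      apply (case2L c m x i j); auto. pose proof (Hp i Hi); lra.
    + exfalso. apply (Contra i Hi). apply case1L; auto.
      intros j Hj Hji. specialize (Hmin j Hj). destruct (Rle_lt_or_eq_dec _ _ Hmin); auto.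
      exfalso; apply Hs; exists j; auto.
  - intros i Hi Hmax.
    assert (Hex : exists j, (j < m)%nat /\ x j < x i).
    { destruct (Rlt_dec (x i1) (x i)). exists i1; auto.
      exists j1; split; auto. pose proof (Hmax i1 Hi1). pose proof (Hmax j1 Hj1) as H2.
      destruct (Rle_lt_or_eq_dec _ _ H2); auto. exfalso; apply Hne; lra. }
    destruct (classic (exists j, (j < m)%nat /\ j <> i /\ x j = x i)) as [Hs|Hs].
    + split; auto. destruct (Rlt_dec (x i) 1) as [h|h]; auto.
      exfalso. destruct Hs as [j [Hj [Hji Hxj]]]. apply (Contra i Hi).
      apply (case2R c m x i j); auto. pose proof (Hp i Hi); lra.
    + exfalso. apply (Contra i Hi). apply case1R; auto.
      intros j Hj Hji. specialize (Hmax j Hj). destruct (Rle_lt_or_eq_dec _ _ Hmax); auto.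
      exfalso; apply Hs; exists j; auto.
Qed.
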